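(* Assume $a^1_K:=\langle[H_1,[H_0,H_1]]\varphi_1,\varphi_K\rangle\neq0$. There exists $T^*>0$ such that for every $T\in(0,T^* )$ and every real $s\in L^2(0,T)$, $-\operatorname{sign}(a^1_K)\,Q(s)\ge\frac{|a^1_K|}{8}\int_0^Ts(t)^2dt$, where $$Q(s)=-\frac{a^1_K}{2}\int_0^Ts(t)^2\cos[(\lambda_K-\lambda_1)(t-T)]dt+\sum_{j=1}^p\langle[H_0,H_1]\varphi_1,\varphi_j\rangle\langle[H_0,H_1]\varphi_j,\varphi_K\rangle\int_0^Ts(t)\int_0^ts(\tau)\sin\big(\lambda_j(\tau-t)+\lambda_K(t-T)+\lambda_1(T-\tau)\big)d\tau dt.$$
   Context: $H_0,H_1$ real symmetric $p\times p$ matrices, $[M,N]=MN-NM$, $(\varphi_j)$ a real orthonormal eigenbasis of $H_0$ with eigenvalues $\lambda_j$, $K\in\{1,\dots,p\}$, $\langle\cdot,\cdot\rangle$ the Hermitian product of $\mathbb{C}^p$. *)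

(* Defs.v *)
From HB Require Import structures.
From mathcomp Require Import all_boot all_order all_algebra.
From mathcomp Require Import all_classical all_reals all_analysis.
Set Implicit Arguments. Unset Strict Implicit. Unset Printing Implicit Defensive.
Import Order.TTheory GRing.Theory Num.Theory.
Local Open Scope ring_scope.
Local Open Scope classical_set_scope.

Section Defs.
Variables (R : realType) (p : nat).

Definition comm (M N : 'M[R]_p) : 'M[R]_p := M *m N - N *m M.

(* <u, v> = sum_i u_i * conj(v_i); all vectors here are real, so the
   Hermitian product of C^p restricts to the usual real inner product. *)
Definition dotv (u v : 'cV[R]_p) : R := \sum_(i < p) u i 0 * v i 0.

Definition Lint (a b : R) (f : R -> R) : R :=
  Rintegral (@lebesgue_measure R) `[a, b] f.

(* a^1_K = < [H1,[H0,H1]] phi_1, phi_K >, index 1 is ord0 *)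
Definition aK (H0 H1 : 'M[R]_p) (phi : 'I_p -> 'cV[R]_p) (i1 K : 'I_p) : R :=
  dotv (comm H1 (comm H0 H1) *m phi i1) (phi K).

Definition Qform (H0 H1 : 'M[R]_p) (phi : 'I_p -> 'cV[R]_p) (lam : 'I_p -> R)
  (i1 K : 'I_p) (T : R) (s : R -> R) : R :=
  - (aK H0 H1 phi i1 K / 2) *
      Lint 0 T (fun t => s t ^+ 2 * cos ((lam K - lam i1) * (t - T)))
  + \sum_(j < p) dotv (comm H0 H1 *m phi i1) (phi j) *
                 dotv (comm H0 H1 *m phi j) (phi K) *
      Lint 0 T (fun t => s t * Lint 0 t (fun tau =>
          s tau * sin (lam j * (tau - t) + lam K * (t - T) + lam i1 * (T - tau)))).

End Defs.

(* Main.v *)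
Require Import Defs.
From HB Require Import structures.
From mathcomp Require Import all_boot all_order all_algebra.
From mathcomp Require Import all_classical all_reals all_analysis.
From mathcomp Require Import lra measurable_realfun.
Import Order.TTheory GRing.Theory Num.Theory.
Local Open Scope ring_scope.
Local Open Scope classical_set_scope.

Section H.
Context {R : realType}.
Notation mu := (@lebesgue_measure R).

Lemma ge0_le_int_nm (D : set R) (f g : R -> \bar R) :
  (forall x, D x -> (0 <= f x)%E) -> (forall x, D x -> (f x <= g x)%E) ->
  (\int[mu]_(x in D) f x <= \int[mu]_(x in D) g x)%E.
Proof.
move=> f0 fg.
have g0 : forall x, D x -> (0 <= g x)%E by move=> x Dx; exact: le_trans (f0 x Dx) (fg x Dx).
rewrite (ge0_integralE mu f0) (ge0_integralE mu g0).
apply: ereal_sup_le => _ [h hf <-]; exists h => //= x.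
apply: (le_trans (hf x)); rewrite /patch; case: ifP => // /set_mem Dx; exact: fg.
Qed.

Lemma Rint_le_dom (D : set R) (f G : R -> R) : measurable D ->
  (forall x, D x -> `|f x| <= G x) -> mu.-integrable D (EFin \o G) ->
  `|Rintegral mu D f| <= Rintegral mu D G.
Proof.
move=> mD fG iG.
have G0 : forall x, D x -> 0 <= G x by move=> x Dx; exact: le_trans (fG x Dx).
have finG : (\int[mu]_(x in D) (G x)%:E)%E \is a fin_num.
  exact: integrable_fin_num iG.
have hP : (0 <= \int[mu]_(x in D) ((EFin \o f)^\+ x) <= \int[mu]_(x in D) (G x)%:E)%E.
  apply/andP; split; first by apply: integral_ge0 => x _; exact: funepos_ge0.
  apply: ge0_le_int_nm => x Dx; first exact: funepos_ge0.
  rewrite funeposE /= ge_max !lee_fin G0 // andbT.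
  exact: le_trans (ler_norm _) (fG x Dx).
have hN : (0 <= \int[mu]_(x in D) ((EFin \o f)^\- x) <= \int[mu]_(x in D) (G x)%:E)%E.
  apply/andP; split; first by apply: integral_ge0 => x _; exact: funeneg_ge0.
  apply: ge0_le_int_nm => x Dx; first exact: funeneg_ge0.
  rewrite funenegE /= ge_max !lee_fin G0 // andbT.
  by apply: le_trans (fG x Dx); rewrite -normrN; exact: ler_norm.
rewrite /Rintegral integralE.
move: hP hN finG.
set P := (\int[mu]_(x in D) _)%E.
set N := (\int[mu]_(x in D) _)%E.
set I := (\int[mu]_(x in D) _)%E.
move: P N I => [p| |] [n| |] [i| |] //=; rewrite ?lee_fin ?leey ?leNye //=;
  try by rewrite ?andbF.
move=> /andP[p0 pi] /andP[n0 ni] _.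
rewrite ler_norml; apply/andP; split; lra.
Qed.

Lemma int_cst (T c : R) : mu.-integrable `[0, T] (EFin \o cst c).
Proof.
pose D : set R := `[0, T].
have hf : (mu D < +oo)%E.
  rewrite /D lebesgue_measure_itv /=; case: ifP => // _; exact: ltry.
apply: measurable_bounded_integrable hf _ _ => //; [exact: measurable_itv | exact: bounded_cst].
Qed.

Lemma Lint_cst (T c : R) : 0 <= T -> Lint 0 T (fun _ => c) = c * T.
Proof.
move=> T0; pose D : set R := `[0, T].
have hD : mu D = T%:E.
  rewrite /D lebesgue_measure_itv /= lte_fin.
  case: ltgtP T0 => // [T0 _|<- _]; last by [].
  by rewrite oppr0 adde0.
have mD : measurable D by exact: measurable_itv.
rewrite /Lint -/D (Rintegral_cst mu mD).
congr (_ * _); exact: (congr1 fine hD).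
Qed.

Lemma Lint_sub (t T : R) (f : R -> R) : 0 <= t <= T ->
  measurable_fun `[0, T] f -> (forall x, 0 <= f x) ->
  mu.-integrable `[0, T] (EFin \o f) -> Lint 0 t f <= Lint 0 T f.
Proof.
move=> /andP[t0 tT] mf f0 iT.
have iS : mu.-integrable `[0, t] (EFin \o f).
  apply: integrableS iT => //; apply: subset_itvl; by rewrite bnd_simp.
rewrite /Lint /Rintegral fine_le //; [exact: integrable_fin_num iS
  | exact: integrable_fin_num iT | ].
apply: ge0_subset_integral => //.
- exact/measurable_EFinP.
- by move=> x _; rewrite lee_fin.
- apply: subset_itvl; by rewrite bnd_simp.
Qed.

Lemma sq_abs (x : R) : x ^+ 2 = `|x| ^+ 2.
Proof. by rewrite real_normK // num_real. Qed.

Lemma key (T : R) (s : R -> R) (k : R -> R -> R) : 0 < T ->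
  measurable_fun `[0, T] s ->
  mu.-integrable `[0, T] (fun t => ((s t) ^+ 2)%:E) ->
  (forall t, measurable_fun setT (k t)) ->
  (forall t x, `|k t x| <= 1) ->
  `|Lint 0 T (fun t => s t * Lint 0 t (fun x => s x * k t x))|
    <= T * Lint 0 T (fun t => s t ^+ 2).
Proof.
move=> T0 ms is2 mk k1.
have mA : measurable_fun `[0, T] (fun t => `|s t|).
  by apply: measurableT_comp => //; exact: normr_measurable.
have iA : mu.-integrable `[0, T] (EFin \o (fun t => `|s t|)).
  apply: (@le_integrable _ _ _ mu _ _ _ ((fun t => ((s t)^+2)%:E) \+ (EFin \o cst 1))) => //.
  - exact/measurable_EFinP.
  - move=> x _ /=; rewrite lee_fin normr_id.
    rewrite [`|s x ^+ 2 + 1|]ger0_norm; last by apply: addr_ge0 => //; exact: sqr_ge0.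
    have := normr_ge0 (s x); rewrite sq_abs; nra.
  - apply: integrableD => //; first [exact: measurable_itv | exact: int_cst].
set M := Lint 0 T (fun t => `|s t|).
set S := Lint 0 T (fun t => s t ^+ 2).
have M0 : 0 <= M by apply: Rintegral_ge0 => x _.
have hin : forall t, 0 <= t <= T -> `|Lint 0 t (fun x => s x * k t x)| <= M.
  move=> t tT; apply: (le_trans _ (Lint_sub _ _ _ tT mA (fun x => normr_ge0 _) iA)).
  apply: Rint_le_dom.
  - exact: measurable_itv.
  - by move=> x _; rewrite normrM ler_piMr.
  - apply: (integrableS _ _ _ iA); try exact: measurable_itv.
    by apply: subset_itvl; case/andP: tT => _ tT; rewrite bnd_simp.
have iMA : mu.-integrable `[0, T] (EFin \o (fun t => M * `|s t|)).
  apply: (@eq_integrable _ _ _ mu _ _ (fun x => (M%:E * (EFin \o (fun t => `|s t|%R)) x)%E)).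
  - exact: measurable_itv.
  - by move=> x _ /=; rewrite EFinM.
  - apply: integrableZl => //; exact: measurable_itv.
have hout : `|Lint 0 T (fun t => s t * Lint 0 t (fun x => s x * k t x))| <= M * M.
  apply: (le_trans (Rint_le_dom _ _ (fun t => M * `|s t|) _ _ iMA)).
  - exact: measurable_itv.
  - move=> x /=; rewrite in_itv /= => xT.
    rewrite normrM mulrC; apply: ler_wpM2r => //; exact: hin.
  - rewrite /Lint RintegralZl //; exact: measurable_itv.
pose c := M / T.
have hc : c * T = M by rewrite /c divfK // gt_eqF.
have hle : Lint 0 T (fun t => (2 * c) * `|s t|) <= Lint 0 T (fun t => s t ^+ 2 + c ^+ 2).
  apply: le_Rintegral.
  - exact: measurable_itv.
  - apply: (@eq_integrable _ _ _ mu _ _ (fun x => ((2 * c)%:E * (EFin \o (fun t => `|s t|%R)) x)%E)).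
    + exact: measurable_itv.
    + by move=> x _ /=; rewrite EFinM.
    + apply: integrableZl => //; exact: measurable_itv.
  - apply: (@eq_integrable _ _ _ mu _ _ ((fun t => ((s t)^+2)%:E) \+ (EFin \o cst (c ^+ 2)))).
    + exact: measurable_itv.
    + by move=> x _ /=; rewrite EFinD.
    + apply: integrableD => //; first [exact: measurable_itv | exact: int_cst].
  - move=> x _; rewrite sq_abs; have := sqr_ge0 (`|s x| - c); nra.
have mD : measurable (`[0, T] : set R) by exact: measurable_itv.
move: hle; rewrite /Lint (@RintegralZl _ _ _ mu _ _ (2 * c) mD iA).
rewrite (@RintegralD _ _ _ mu _ _ _ mD is2 (int_cst T (c ^+ 2))).
have hc2 := Lint_cst T (c ^+ 2) (ltW T0); rewrite /Lint in hc2.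
rewrite hc2 -/(Lint 0 T _) -/M -/S => hle.
apply: le_trans hout _.
move: hle hc M0; rewrite /M /S /Lint => hle hc M0; nra.
Qed.

Lemma meas_aff (a b : R) : measurable_fun setT (fun x : R => a * (x - b)).
Proof.
apply: measurableT_comp; first exact: mulrl_measurable.
by apply: measurable_funB.
Qed.

Lemma meas_aff2 (a b : R) : measurable_fun setT (fun x : R => a * (b - x)).
Proof.
apply: measurableT_comp; first exact: mulrl_measurable.
by apply: measurable_funB.
Qed.

Lemma first_term (T w : R) (s : R -> R) : 0 < T ->
  (forall x, 0 <= x <= T -> 1/2 <= cos (w * (x - T))) ->
  measurable_fun `[0, T] s ->
  mu.-integrable `[0, T] (fun t => ((s t) ^+ 2)%:E) ->
  1/2 * Lint 0 T (fun t => s t ^+ 2) <= Lint 0 T (fun t => s t ^+ 2 * cos (w * (t - T))).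
Proof.
move=> T0 hcos ms is2.
have mD : measurable (`[0, T] : set R) by exact: measurable_itv.
rewrite /Lint -(@RintegralZl _ _ _ mu _ _ (1/2) mD is2).
apply: le_Rintegral => //.
- apply: (@eq_integrable _ _ _ mu _ _ (fun x => ((1/2)%:E * (s x ^+ 2)%:E)%E)).
  + exact: measurable_itv.
  + by move=> x _ /=; rewrite EFinM.
  + apply: integrableZl => //; exact: measurable_itv.
- apply: (@le_integrable _ _ _ mu _ _ _ (fun t => ((s t)^+2)%:E)) => //.
  + apply/measurable_EFinP; apply: measurable_funM.
    * exact: measurable_funX.
    * apply: (measurable_funS _ (@subsetT _ _)) => //.
      apply: measurableT_comp; first by apply: continuous_measurable_fun; exact: continuous_cos.
      exact: meas_aff.
  + move=> x xD /=; rewrite lee_fin normrM.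
    by apply: ler_piMr => //; exact: cos_max.
- move=> x; rewrite /= in_itv /= => xT.
  have := hcos x xT; have := sqr_ge0 (s x); nra.
Qed.
End H.

Lemma cos_near (R : realType) : exists2 e : R, 0 < e & forall x : R, `|x| < e -> 1/2 <= cos x.
Proof.
have := @continuous_cos R 0; move/cvgrPdist_lt => /(_ (1/2)) H.
have /H : (0 : R) < 1/2 by [].
move=> /nbhs_ballP [e /= e0 He]; exists e => // x xe.
have := He x; rewrite /ball /= sub0r normrN => /(_ xe).
rewrite cos0 => h; have := ler_norm (1 - cos x); lra.
Qed.

Theorem lemma2p5 (R : realType) (p' : nat)
  (H0 H1 : 'M[R]_p'.+1)
  (phi : 'I_p'.+1 -> 'cV[R]_p'.+1) (lam : 'I_p'.+1 -> R) (K : 'I_p'.+1) :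
  H0^T = H0 -> H1^T = H1 ->
  (forall i j, dotv (phi i) (phi j) = (i == j)%:R) ->
  (forall j, H0 *m phi j = lam j *: phi j) ->
  aK H0 H1 phi ord0 K != 0 ->
  exists Tstar : R, 0 < Tstar /\
    forall (T : R), 0 < T -> T < Tstar ->
    forall s : R -> R,
      measurable_fun `[0, T] s ->
      (@lebesgue_measure R).-integrable `[0, T] (fun t => ((s t) ^+ 2)%:E) ->
      - Num.sg (aK H0 H1 phi ord0 K) * Qform H0 H1 phi lam ord0 K T s
        >= `|aK H0 H1 phi ord0 K| / 8 * Lint 0 T (fun t => s t ^+ 2).
Proof.
move=> _ _ _ _ a0.
set a := aK H0 H1 phi ord0 K.
set w := lam K - lam ord0.
pose c (j : 'I_p'.+1) := dotv (comm H0 H1 *m phi ord0) (phi j) *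
                 dotv (comm H0 H1 *m phi j) (phi K).
pose C := \sum_j `|c j|.
have C0 : 0 <= C by apply: sumr_ge0 => j _.
have [e e0 he] := cos_near R.
have na : 0 < `|a| by rewrite normr_gt0.
exists (Num.min (e / (`|w| + 1)) (`|a| / (8 * (C + 1)))); split.
  have h1 : 0 < `|w| + 1 by apply: ltr_pwDr.
  have h2 : 0 < 8 * (C + 1) by apply: mulr_gt0 => //; apply: ltr_pwDr.
  by rewrite lt_min; apply/andP; split; apply: divr_gt0.
move=> T T0; rewrite lt_min => /andP[Te Ta] s ms is2.
have wT : `|w| * T < e.
  have h1 : 0 < `|w| + 1 by apply: ltr_pwDr.
  rewrite ltr_pdivlMr // in Te; nra.
have CT : 8 * C * T <= `|a|.
  have h1 : 0 < 8 * (C + 1) by apply: mulr_gt0 => //; apply: ltr_pwDr.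
  rewrite ltr_pdivlMr // in Ta; nra.
rewrite /Qform -/a.
set S := Lint 0 T (fun t => s t ^+ 2).
have S0 : 0 <= S by apply: Rintegral_ge0 => x _; exact: sqr_ge0.
set J := Lint 0 T (fun t => s t ^+ 2 * cos ((lam K - lam ord0) * (t - T))).
have hJ : 1/2 * S <= J.
  apply: first_term => // x /andP[x0 xT]; apply: he.
  rewrite normrM; apply: le_lt_trans wT; apply: ler_wpM2l => //.
  rewrite ler0_norm ?subr_le0 //; lra.
set Y := \sum_(j < p'.+1) _.
have hY : `|Y| <= C * (T * S).
  rewrite /C mulr_suml; apply: le_trans (ler_norm_sum _ _ _) _.
  apply: ler_sum => j _; rewrite normrM; apply: ler_wpM2l => //.
  apply: (key _ _ (fun t tau => sin (lam j * (tau - t) + lam K * (t - T) + lam ord0 * (T - tau)))) => //.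
  - move=> t; apply: measurableT_comp; first by apply: continuous_measurable_fun; exact: continuous_sin.
    apply: measurable_funD; first apply: measurable_funD.
    + exact: meas_aff.
    + by [].
    + exact: meas_aff2.
  - move=> t x; exact: sin_max.
have hY1 : Y <= C * (T * S) by apply: le_trans (ler_norm Y) hY.
have hY2 : - Y <= C * (T * S) by rewrite -normrN in hY; apply: le_trans (ler_norm (- Y)) hY.
have [an|ap] := ltrP a 0.
  rewrite ltr0_sg // ltr0_norm // in CT na *.
  have hp1 : 0 <= S * (- a - 8 * C * T) by apply: mulr_ge0 => //; lra.
  have hp2 : 0 <= (- a) * (J - 1/2 * S) by apply: mulr_ge0 => //; lra.
  nra.
have ap' : 0 < a by rewrite lt_neqAle eq_sym a0.
rewrite gtr0_sg // gtr0_norm // in CT na *.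
have hp1 : 0 <= S * (a - 8 * C * T) by apply: mulr_ge0 => //; lra.
have hp2 : 0 <= a * (J - 1/2 * S) by apply: mulr_ge0 => //; lra.
nra.
Qed.
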